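(* Let $G=(V,E)$ be an undirected graph, $\vec{x}\in\mathbb{R}^n$ non-negative with $\|\vec{x}\|_1=1$, and $\delta\in(0,1)$. Consider any of the following choices of $(a,b,(w_i))$: (i) PageRank/Personalized PageRank: $a=0,b=1$, $w_i=\alpha(1-\alpha)^i$ with constant $\alpha\in(0,1)$; (ii) heat kernel PageRank: $a=0,b=1$, $w_i=e^{-t}t^i/i!$ with constant $t>0$; (iii) $k$-hop transition probability: $a=0,b=1$, $w_k=1$ and $w_i=0$ for $i\neq k$; (iv) Katz: $a=b=0$, $w_i=\beta^i$ with constant $0<\beta<1/\lambda_1$, where $\lambda_1$ is the largest eigenvalue of $\mathbf{A}$. Let $\mathbf{P}=\mathbf{D}^{-a}\mathbf{A}\mathbf{D}^{-b}$, $\vec{\pi}=\sum_{i=0}^\infty w_i\mathbf{P}^i\vec{x}$ and $\vec{\pi}_L=\sum_{i=0}^L w_i\mathbf{P}^i\vec{x}$. Then (without any further assumption on the weights) there is an integer $L$, with $L=O(\log(1/\delta))$ in cases (i), (ii), (iv) and any $L\ge k$ in case (iii), such that $\left\|\sum_{i=L+1}^\infty w_i\mathbf{P}^i\vec{x}\right\|_2\le\delta/19$, and consequently: if $\hat{\vec{\pi}}\in\mathbb{R}^n$ satisfies $|\vec{\pi}_L(v)-\hat{\vec{\pi}}(v)|\le\frac{1}{20}\vec{\pi}_L(v)$ for every $v$ with $\vec{\pi}_L(v)>\frac{18}{19}\delta$, then $|\vec{\pi}(v)-\hat{\vec{\pi}}(v)|\le\frac{1}{10}\vec{\pi}(v)$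 for every $v$ with $\vec{\pi}(v)\ge\delta$.
   Context: $G=(V,E)$ has $n$ nodes; $\mathbf{A}$ is its adjacency matrix and $\mathbf{D}$ the diagonal degree matrix with $\mathbf{D}(i,i)=\sum_j\mathbf{A}(i,j)$; $\mathbf{D}^{0}$ is the identity. *)

(* Defs.v *)
From HB Require Import structures.
From mathcomp Require Import all_boot all_order all_algebra.
From mathcomp Require Import all_classical all_reals all_analysis.
Set Implicit Arguments. Unset Strict Implicit. Unset Printing Implicit Defensive.
Import Order.TTheory GRing.Theory Num.Theory.
Local Open Scope ring_scope.

Section Defs.
Variables (R : realType) (n : nat).
Implicit Types (e : rel 'I_n) (w : nat -> R) (P : 'M[R]_n) (x : 'cV[R]_n).

Definition adjmx e : 'M[R]_n := \matrix_(i, j) (e i j)%:R.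

Definition degree e (i : 'I_n) : R := \sum_j adjmx e i j.

(* D^{-k} as a diagonal matrix; D^{-0} = identity.  Convention (mathcomp):
   0^-1 = 0, so an isolated vertex gets D^{-1}(i,i) = 0. *)
Definition Dinvpow e (k : nat) : 'M[R]_n :=
  diag_mx (\row_i (degree e i) ^- k).

Definition propmx e (a b : nat) : 'M[R]_n :=
  Dinvpow e a *m adjmx e *m Dinvpow e b.

Definition pterm w P x (i : nat) : 'cV[R]_n := w i *: (P ^+ i *m x).

Definition pi_inf w P x : 'cV[R]_n :=
  \col_v limn (fun N => \sum_(0 <= i < N) pterm w P x i v ord0).

Definition pi_L w P x (L : nat) : 'cV[R]_n :=
  \sum_(0 <= i < L.+1) pterm w P x i.

Definition pi_tail w P x (L : nat) : 'cV[R]_n :=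
  \col_v limn (fun N => \sum_(L.+1 <= i < N) pterm w P x i v ord0).

Definition norm2 (y : 'cV[R]_n) : R := Num.sqrt (\sum_v (y v ord0) ^+ 2).

Definition prob_vec x : Prop :=
  (forall v, 0 <= x v ord0) /\ \sum_v `|x v ord0| = 1.

Definition lemmaC3_concl w P x (delta : R) (L : nat) : Prop :=
  norm2 (pi_tail w P x L) <= delta / 19 /\
  forall pihat : 'cV[R]_n,
    (forall v, 18 / 19 * delta < pi_L w P x L v ord0 ->
       `|pi_L w P x L v ord0 - pihat v ord0| <= pi_L w P x L v ord0 / 20) ->
    forall v, delta <= pi_inf w P x v ord0 ->
       `|pi_inf w P x v ord0 - pihat v ord0| <= pi_inf w P x v ord0 / 10.

End Defs.

Definition w_pagerank (R : realType) (alpha : R) (i : nat) : R :=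
  alpha * (1 - alpha) ^+ i.
Definition w_heat (R : realType) (t : R) (i : nat) : R :=
  expR (- t) * t ^+ i / (i `!)%:R.
Definition w_hop (R : realType) (k : nat) (i : nat) : R := (i == k)%:R.
Definition w_katz (R : realType) (beta : R) (i : nat) : R := beta ^+ i.

(* Main.v *)
Require Import Defs.
From HB Require Import structures.
From mathcomp Require Import all_boot all_order all_algebra.
From mathcomp Require Import all_classical all_reals all_analysis.
From mathcomp Require Import ring lra.
Import Order.TTheory GRing.Theory Num.Theory.
Local Open Scope ring_scope.
Local Open Scope classical_set_scope.

Section Core.
Variables (R : realType) (n : nat).
Implicit Types (w : nat -> R) (P : 'M[R]_n) (x : 'cV[R]_n).

Lemma core w P x (delta T : R) (L : nat) :
  (forall i v, 0 <= pterm w P x i v ord0) ->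
  (forall N, \sum_(L.+1 <= i < N) \sum_v pterm w P x i v ord0 <= T) ->
  T < delta / 19 -> 0 < delta ->
  lemmaC3_concl w P x delta L.
Proof.
move=> Hpos HT HTd Hd.
pose b v N := \sum_(L.+1 <= i < N) pterm w P x i v ord0.
have bnd : forall v N, b v N <= T.
  move=> v N; apply: le_trans (HT N); rewrite /b exchange_big /=.
  by rewrite (bigD1 v) //= lerDl sumr_ge0 // => u _; rewrite sumr_ge0.
have b0 : forall v N, 0 <= b v N by move=> v N; rewrite sumr_ge0.
have bnd' : forall v, nondecreasing_seq (b v).
  move=> v; apply/nondecreasing_seqP => N; rewrite /b.
  case: (leqP L.+1 N) => HN.
    by rewrite big_nat_recr //= lerDl.
  by rewrite [X in X <= _]big_geq // ?b0 // ltnW.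
have bcv : forall v, cvgn (b v).
  move=> v; apply: nondecreasing_is_cvgn => //.
  by exists T => _ [N _ <-].
have tE : forall v, pi_tail w P x L v ord0 = limn (b v) by move=> v; rewrite mxE.
have t0 : forall v, 0 <= limn (b v).
  by move=> v; apply: limr_ge => //; near=> N; apply: b0.
have tT : forall v, limn (b v) <= T.
  by move=> v; apply: limr_le => //; near=> N; apply: bnd.
have sumT : \sum_v limn (b v) <= T.
  have cv : (fun N => \sum_v b v N) @ \oo --> \sum_v limn (b v).
    by apply: (cvg_big (P:=xpredT)) => //; exact: add_continuous.
  rewrite -(cvg_lim _ cv) //; apply: limr_le; first exact: cvgP cv.
  near=> N; rewrite /b exchange_big /=; exact: HT.
have piE : forall v, pi_inf w P x v ord0 = pi_L w P x L v ord0 + limn (b v).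
  move=> v; rewrite mxE.
  have cv : (fun N => \sum_(0 <= i < N) pterm w P x i v ord0) @ \oo -->
            pi_L w P x L v ord0 + limn (b v).
    have EQ : \forall N \near \oo, (fun N => pi_L w P x L v ord0 + b v N) N =
        (fun N => \sum_(0 <= i < N) pterm w P x i v ord0) N.
      near=> N.
      have HN : (L.+1 <= N)%N by near: N; exact: nbhs_infty_ge.
      rewrite /pi_L summxE (big_cat_nat (leq0n L.+1) HN) /=.
      by rewrite /b.
    apply: cvg_trans (near_eq_cvg EQ) _.
    apply: cvgD; first exact: cvg_cst.
    exact: bcv.
  exact: cvg_lim cv.
split.
  rewrite /norm2.
  have -> : \sum_v pi_tail w P x L v ord0 ^+ 2 = \sum_v (limn (b v)) ^+ 2.
    by apply: eq_bigr => v _; rewrite tE.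
  have S0 : 0 <= \sum_v limn (b v) by rewrite sumr_ge0.
  have H1 : \sum_v (limn (b v)) ^+ 2 <= (\sum_v limn (b v)) ^+ 2.
    rewrite expr2 mulr_suml; apply: ler_sum => v _.
    rewrite expr2 ler_wpM2l //.
    by rewrite (bigD1 v) //= lerDl sumr_ge0.
  have H2 : (\sum_v limn (b v)) ^+ 2 <= (delta / 19) ^+ 2.
    rewrite ler_sqr ?nnegrE //; last by rewrite divr_ge0 // ltW.
    by apply: le_trans sumT (ltW HTd).
  apply: (@le_trans _ _ (Num.sqrt ((delta / 19) ^+ 2))).
    by rewrite ler_sqrt ?sqr_ge0 //; exact: le_trans H1 H2.
  by rewrite sqrtr_sqr ger0_norm // divr_ge0 // ltW.
move=> pihat Hhat v Hv.
have := piE v; have := t0 v; have := tT v.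
set p := pi_inf w P x v ord0; set q := pi_L w P x L v ord0; set t := limn (b v).
move=> tT' t0' pE.
have Hq : 18 / 19 * delta < q by rewrite -/p in Hv; lra.
have := Hhat v Hq; rewrite -/q => Hh.
have -> : p - pihat v ord0 = t + (q - pihat v ord0) by rewrite pE; ring.
apply: le_trans (ler_normD _ _) _.
rewrite ger0_norm //.
rewrite -/p in Hv. lra.
Unshelve. all: by end_near.
Qed.
End Core.

Section Geo.
Variable R : realType.

Lemma geo_sum (q : R) (a N : nat) : 0 <= q < 1 ->
  \sum_(a <= i < N) q ^+ i <= q ^+ a / (1 - q).
Proof.
move=> /andP[q0 q1].
have h1 : 0 < 1 - q by lra.
have key : forall M, (a <= M)%N ->
  \sum_(a <= i < M) q ^+ i + q ^+ M / (1 - q) = q ^+ a / (1 - q).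
  elim=> [|k IH] HN.
    by move: HN; rewrite leqn0 => /eqP ->; rewrite big_geq // add0r.
  case: (leqP a k) => HaN.
    rewrite big_nat_recr //= -IH //= -addrA; congr (_ + _).
    rewrite exprS; field; lra.
  have -> : a = k.+1 by apply/eqP; rewrite eqn_leq HN HaN.
  by rewrite big_geq // add0r.
case: (leqP a N) => HaN.
  have := key N HaN.
  set S := \sum_(a <= i < N) q ^+ i; set u := q ^+ N / (1 - q); set r := q ^+ a / (1 - q).
  have hp : 0 <= u by exact: divr_ge0 (exprn_ge0 _ q0) (ltW h1).
  move=> h; clearbody S u r; clear key; lra.
rewrite big_geq; last exact: ltnW.
exact: divr_ge0 (exprn_ge0 _ q0) (ltW h1).
Qed.

Lemma choose_L (K q : R) (m : nat) : 0 < K -> 0 < q < 1 ->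
  exists C : R, 0 < C /\ forall delta : R, 0 < delta < 1 ->
  exists L : nat, (m <= L)%N /\ L%:R <= C * (1 + ln (delta^-1)) /\
    K * (q ^+ L.+1 / (1 - q)) < delta / 19.
Proof.
move=> K0 /andP[q0 q1].
set c := ln (q^-1).
have c0 : 0 < c by rewrite /c ln_gt0 // invf_gt1 //.
set A := ln (19 * K / (1 - q)).
exists (m%:R + (`|A| + 1) / c); split.
  by apply: ltr_wpDl; rewrite ?ler0n // divr_gt0 //; lra.
move=> delta /andP[d0 d1].
set l := ln (delta^-1).
have l0 : 0 <= l by rewrite /l ln_ge0 // invf_ge1 // ltW.
set y := (`|A| + l) / c.
have y0 : 0 <= y by apply: divr_ge0; [exact: addr_ge0 | exact: ltW].
exists (m + Num.truncn y)%N; split; first exact: leq_addr.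
have [ty1 ty2] : (Num.truncn y)%:R <= y /\ y < (Num.truncn y).+1%:R.
  by have /andP[] := truncn_itv y0.
split.
  rewrite natrD.
  have : y <= (`|A| + 1) / c * (1 + l).
    have h2 : (`|A| + l) <= (`|A| + 1) * (1 + l).
      rewrite mulrDl !mulrDr !mulr1 mul1r.
      have : 0 <= `|A| * l by rewrite mulr_ge0.
      set p := `|A| * l; clearbody p; lra.
    rewrite /y mulrAC; apply: ler_wpM2r h2.
    by rewrite invr_ge0 ltW.
  have hm : 0 <= m%:R * l :> R by rewrite mulr_ge0.
  rewrite [(m%:R + _) * _]mulrDl [m%:R * (1 + l)]mulrDr mulr1.
  move: ty1 hm; set X := (`|A| + 1) / c * (1 + l); set Y := m%:R * l.
  set T := (Num.truncn y)%:R; clearbody X Y T y; move=> *; lra.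
have q1' : 0 < 1 - q by lra.
have Hpos : 0 < delta * (1 - q) / (19 * K) by rewrite !divr_gt0 // ?mulr_gt0.
suff : q ^+ (m + Num.truncn y).+1 < delta * (1 - q) / (19 * K).
  move=> H.
  have -> : delta / 19 = K * ((delta * (1 - q) / (19 * K)) / (1 - q)).
    by field; rewrite (gt_eqF q1') (gt_eqF K0).
  rewrite ltr_pM2l // ltr_pM2r ?invr_gt0 //.
set k := (m + Num.truncn y).+1.
rewrite -ltr_ln ?posrE ?exprn_gt0 //.
have e1 : ln (q ^+ k) = - (k%:R * c).
  by rewrite lnXn // /c lnV ?posrE // mulrN opprK mulr_natl.
have e2 : ln (delta * (1 - q) / (19 * K)) = - l - A.
  have -> : delta * (1 - q) / (19 * K) = delta * (19 * K / (1 - q))^-1.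
    by field; rewrite (gt_eqF q1') (gt_eqF K0).
  rewrite lnM ?posrE ?invr_gt0 ?divr_gt0 ?mulr_gt0 //.
  rewrite lnV ?posrE ?divr_gt0 ?mulr_gt0 //.
  by rewrite /l lnV ?posrE // opprK -/A.
rewrite e1 e2.
have : (`|A| + l) < k%:R * c.
  rewrite -ltr_pdivrMr // -/y.
  apply: lt_le_trans ty2 _; rewrite ler_nat ltnS leq_addl //.
have : A <= `|A| by exact: ler_norm.
set kc := k%:R * c.
lra.
Qed.
End Geo.

Section Cases.
Variable R : realType.

Lemma geo_case (K q : R) (m : nat) : 0 < K -> 0 < q < 1 ->
  exists C : R, 0 < C /\ forall n (w : nat -> R) (P : 'M[R]_n) (x : 'cV[R]_n) (delta : R),
   (forall i v, 0 <= pterm w P x i v ord0) ->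
   (forall i, (m <= i)%N -> \sum_v pterm w P x i v ord0 <= K * q ^+ i) ->
   0 < delta < 1 ->
   exists L : nat, L%:R <= C * (1 + ln (delta^-1)) /\ lemmaC3_concl w P x delta L.
Proof.
move=> K0 q01; have [C [C0 HC]] := @choose_L R K q m K0 q01.
exists C; split => // n w P x delta Hpos Hs d01.
have [L [mL [LC HL]]] := HC _ d01.
exists L; split => //.
have /andP[d0 _] := d01.
apply: (@core _ _ w P x delta (K * (q ^+ L.+1 / (1 - q))) L) => // N.
apply: le_trans (_ : \sum_(L.+1 <= i < N) K * q ^+ i <= _).
  apply: ler_sum_nat => i /andP[Li _]; apply: Hs.
  by apply: leq_trans mL (ltnW Li).
rewrite -mulr_sumr; apply: ler_wpM2l; first exact: ltW.
have /andP[q0 q1] := q01.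
by apply: geo_sum; rewrite q1 andbT ltW.
Qed.

Lemma stoch_step n (M : 'M[R]_n) (y : 'cV[R]_n) :
  (forall i j, 0 <= M i j) -> (forall j, \sum_i M i j <= 1) ->
  (forall v, 0 <= y v ord0) ->
  (forall v, 0 <= (M *m y) v ord0) /\
  \sum_v (M *m y) v ord0 <= \sum_v y v ord0.
Proof.
move=> M0 M1 y0; split.
  by move=> v; rewrite mxE sumr_ge0 // => j _; rewrite mulr_ge0.
under eq_bigr do rewrite mxE.
rewrite exchange_big /=; apply: ler_sum => j _.
rewrite -mulr_suml -[X in _ <= X]mul1r ler_wpM2r //.
Qed.

Lemma stoch_pow n (M : 'M[R]_n) (y : 'cV[R]_n) :
  (forall i j, 0 <= M i j) -> (forall j, \sum_i M i j <= 1) ->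
  (forall v, 0 <= y v ord0) -> forall k,
  (forall v, 0 <= (M ^+ k *m y) v ord0) /\
  \sum_v (M ^+ k *m y) v ord0 <= \sum_v y v ord0.
Proof.
move=> M0 M1 y0; elim=> [|k [IH1 IH2]].
  by rewrite expr0 mul1mx; split.
rewrite exprS -mulmxE -mulmxA.
have [h1 h2] := @stoch_step n M _ M0 M1 IH1.
split => //; exact: le_trans h2 IH2.
Qed.

Lemma P01E n (e : rel 'I_n) i j :
  propmx R e 0 1 i j = adjmx R e i j * (degree R e j)^-1.
Proof.
by rewrite /propmx /Dinvpow mul_mx_diag mul_diag_mx !mxE expr0 invr1 mul1r expr1.
Qed.

Lemma P01_ge0 n (e : rel 'I_n) i j : 0 <= propmx R e 0 1 i j.
Proof.
rewrite P01E mulr_ge0 // ?mxE ?ler0n // invr_ge0 sumr_ge0 // => k _.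
by rewrite mxE ler0n.
Qed.

Lemma P01_col n (e : rel 'I_n) : symmetric e -> forall j, \sum_i propmx R e 0 1 i j <= 1.
Proof.
move=> He j; under eq_bigr do rewrite P01E.
rewrite -mulr_suml.
have -> : \sum_i adjmx R e i j = degree R e j.
  by rewrite /degree; apply: eq_bigr => i _; rewrite !mxE He.
have [->|nz] := eqVneq (degree R e j) 0; first by rewrite mul0r.
by rewrite mulfV.
Qed.

Lemma prob_sum n (x : 'cV[R]_n) : prob_vec x -> \sum_v x v ord0 = 1.
Proof.
move=> [x0 x1]; rewrite -x1; apply: eq_bigr => v _; rewrite ger0_norm //.
Qed.

Lemma P01_terms n (e : rel 'I_n) (x : 'cV[R]_n) (w : nat -> R) :
  symmetric e -> prob_vec x -> (forall i, 0 <= w i) ->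
  (forall i v, 0 <= pterm w (propmx R e 0 1) x i v ord0) /\
  (forall i, \sum_v pterm w (propmx R e 0 1) x i v ord0 <= w i).
Proof.
move=> He px w0.
have H := @stoch_pow n _ x (@P01_ge0 n e) (@P01_col n e He) (proj1 px).
split.
  by move=> i v; rewrite /pterm mxE mulr_ge0 //; case: (H i).
move=> i; rewrite /pterm; under eq_bigr do rewrite mxE.
rewrite -mulr_sumr -[X in _ <= X]mulr1 ler_wpM2l //.
by case: (H i) => _; rewrite prob_sum.
Qed.

End Cases.

Section Cases2.
Variable R : realType.

Lemma heat_ge0 (t : R) i : 0 < t -> 0 < w_heat t i.
Proof.
move=> t0; rewrite /w_heat divr_gt0 ?mulr_gt0 ?expR_gt0 ?exprn_gt0 ?ltr0n ?fact_gt0 //.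
Qed.

Lemma heatS (t : R) k : w_heat t k.+1 = w_heat t k * (t / k.+1%:R).
Proof.
rewrite /w_heat factS natrM exprS.
have h1 : (k`!)%:R != 0 :> R by rewrite pnatr_eq0 -lt0n fact_gt0.

have h2 : 1 + k%:R != 0 :> R by rewrite addrC natr1 pnatr_eq0.
by field; rewrite h1 h2.
Qed.

Lemma heat_bound (t : R) : 0 < t -> exists K m, 0 < K /\
  forall i, (m <= i)%N -> w_heat t i <= K * (2^-1) ^+ i.
Proof.
move=> t0.
set m := (Num.truncn (2 * t)).+1.
have hm : 2 * t < m%:R by rewrite /m truncnS_gt.
exists (w_heat t m * 2 ^+ m), m; split.
  by rewrite mulr_gt0 ?heat_ge0 // exprn_gt0.
have key : forall j, w_heat t (m + j) <= w_heat t m * (2^-1) ^+ j.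
  elim=> [|j IH]; first by rewrite addn0 expr0 mulr1.
  rewrite addnS heatS.
  have hw : 0 <= w_heat t (m + j) by rewrite ltW // heat_ge0.
  apply: (@le_trans _ _ (w_heat t (m + j) * 2^-1)).
    apply: ler_wpM2l => //.
    have hk : 0 < (m + j).+1%:R :> R by rewrite ltr0n.
    rewrite ler_pdivrMr //.
    have : m%:R <= (m + j).+1%:R :> R by rewrite ler_nat; apply: leqW; apply: leq_addr.
    move: hk hm; set u := (m + j).+1%:R; set v := m%:R; clearbody u v.
    move=> *; lra.
  rewrite exprS mulrCA mulrC; apply: ler_wpM2l; first by rewrite invr_ge0.
  exact: IH.
move=> i mi.
have -> : i = (m + (i - m))%N by rewrite subnKC.
apply: le_trans (key _) _.
rewrite exprD mulrA -[w_heat t m * 2 ^+ m * _]mulrA -exprMn mulfV ?expr1n ?mulr1 //.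
Qed.

End Cases2.

Set Implicit Arguments. Unset Strict Implicit. Unset Printing Implicit Defensive.

Section Spec.
Variable R : realType.
Variable n : nat.
Implicit Types (M N : 'M[R]_n) (y z : 'rV[R]_n).

Definition bil M (u v : 'rV[R]_n) : R := \sum_i \sum_j u 0 i * M i j * v 0 j.
Definition qf M y : R := bil M y y.
Definition sq y : R := \sum_i y 0 i ^+ 2.

Lemma bil_mx M y z : (y *m M *m z^T) 0 0 = bil M y z.
Proof.
rewrite mxE /bil exchange_big /=; apply: eq_bigr => j _.
rewrite !mxE mulr_suml; apply: eq_bigr => i _; by rewrite ?mxE.
Qed.

Lemma sq_ge0 y : 0 <= sq y.
Proof. by rewrite sumr_ge0 // => i _; rewrite sqr_ge0. Qed.

Lemma entry_le y i : y 0 i ^+ 2 <= sq y.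
Proof. by rewrite /sq (bigD1 i) //= lerDl sumr_ge0 // => j _; rewrite sqr_ge0. Qed.

Lemma sq_eq0 y : sq y = 0 -> y = 0.
Proof.
move=> h; apply/rowP => i; rewrite mxE.
have := entry_le y i; rewrite h => h2.
have : y 0 i ^+ 2 = 0 by apply/eqP; rewrite eq_le h2 sqr_ge0.
by move/eqP; rewrite sqrf_eq0 => /eqP.
Qed.

Lemma abs_entry_le y i : `|y 0 i| <= Num.sqrt (sq y).
Proof.
by rewrite -sqrtr_sqr ler_sqrt ?sq_ge0 // entry_le.
Qed.

Lemma qf_bound M y : `|qf M y| <= (\sum_i \sum_j `|M i j|) * sq y.
Proof.
rewrite /qf /bil mulr_suml; apply: le_trans (ler_norm_sum _ _ _) _.
apply: ler_sum => i _; rewrite mulr_suml.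
apply: le_trans (ler_norm_sum _ _ _) _; apply: ler_sum => j _.
rewrite !normrM -mulrA mulrC -mulrA ler_wpM2l //.
rewrite -(sqr_sqrtr (sq_ge0 y)) expr2 mulrC.
by apply: ler_pM => //; apply: abs_entry_le.
Qed.

Lemma qfZ M a y : qf M (a *: y) = a ^+ 2 * qf M y.
Proof.
rewrite /qf /bil mulr_sumr; apply: eq_bigr => i _; rewrite mulr_sumr.
by apply: eq_bigr => j _; rewrite !mxE /=; ring.
Qed.

Lemma sqZ a y : sq (a *: y) = a ^+ 2 * sq y.
Proof.
by rewrite /sq mulr_sumr; apply: eq_bigr => i _; rewrite !mxE; ring.
Qed.





Lemma qf_mx M y : (y *m M *m y^T) 0 0 = qf M y.
Proof. exact: bil_mx. Qed.

Lemma sq_mx y : (y *m y^T) 0 0 = sq y.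
Proof. by rewrite mxE /sq; apply: eq_bigr => i _; rewrite !mxE expr2. Qed.

Lemma bilDl M u1 u2 v t : bil M (u1 + t *: u2) v = bil M u1 v + t * bil M u2 v.
Proof.
rewrite /bil mulr_sumr -big_split; apply: eq_bigr => i _.
rewrite mulr_sumr -big_split; apply: eq_bigr => j _; rewrite !mxE /=; ring.
Qed.

Lemma bilDr M u v1 v2 t : bil M u (v1 + t *: v2) = bil M u v1 + t * bil M u v2.
Proof.
rewrite /bil mulr_sumr -big_split; apply: eq_bigr => i _.
rewrite mulr_sumr -big_split; apply: eq_bigr => j _; rewrite !mxE /=; ring.
Qed.

Lemma bil_sym M u v : M^T = M -> bil M u v = bil M v u.
Proof.
move=> HM; rewrite /bil exchange_big /=; apply: eq_bigr => i _; apply: eq_bigr => j _.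
have -> : M j i = M i j by rewrite -{1}HM mxE.
ring.
Qed.

Lemma qf_expand M y z t : M^T = M ->
  qf M (y + t *: z) = qf M y + 2 * bil M z y * t + qf M z * t ^+ 2.
Proof.
move=> HM; rewrite /qf bilDl !bilDr (@bil_sym M y z HM). ring.
Qed.

Lemma disc (a b c : R) : 0 <= a -> (forall t, 0 <= c + 2 * b * t + a * t ^+ 2) ->
  b ^+ 2 <= a * c.
Proof.
move=> a0 H.
have c0 : 0 <= c by have := H 0; rewrite mulr0 expr0n /= mulr0 !addr0.
have [aE|anz] := eqVneq a 0.
  rewrite aE; have [->|bnz] := eqVneq b 0; first by rewrite expr0n mul0r.
  have := H (- (c + 1) / (2 * b)).
  rewrite aE mul0r addr0 mulrA [2 * b * _]mulrC mulfK ?mulf_neq0 //.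
  move=> h; exfalso; move: h; lra.
have ap : 0 < a by rewrite lt_def anz a0.
have := H (- b / a).
have -> : c + 2 * b * (- b / a) + a * (- b / a) ^+ 2 = c - b ^+ 2 / a.
  by field.
rewrite subr_ge0 ler_pdivrMr // => h.
by rewrite mulrC.
Qed.

Lemma sq_mul y (A : 'M[R]_n) : sq (y *m A) = qf (A *m A^T) y.
Proof.
by rewrite -sq_mx -qf_mx trmx_mul !mulmxA.
Qed.

Lemma sqN y : sq (- y) = sq y.
Proof. by rewrite /sq; apply: eq_bigr => i _; rewrite mxE sqrrN. Qed.

End Spec.

Set Implicit Arguments. Unset Strict Implicit. Unset Printing Implicit Defensive.

Section Ray.
Variable R : realType.

Lemma rayleigh n (M : 'M[R]_n) : M^T = M -> (0 < n)%N ->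
  exists lam, eigenvalue M lam /\ forall y, qf M y <= lam * sq y.
Proof.
move=> HM n0.
set B := \sum_i \sum_j `|M i j|.
pose S := [set r : R | exists y : 'rV[R]_n, sq y = 1 /\ r = qf M y].
have hS : has_sup S.
  split.
    pose i0 := Ordinal n0.
    pose y0 := \row_j ((j == i0)%:R : R).
    exists (qf M y0); exists y0; split => //.
    rewrite /sq (bigD1 i0) //= big1 => [|j /negPf hj]; rewrite mxE ?eqxx ?hj.
      by rewrite expr1n addr0.
    by rewrite expr0n.
  exists B => r [y [y1 ->]].
  have := qf_bound M y; rewrite y1 mulr1 => h; exact: le_trans (ler_norm _) h.
set lam := sup S.
have ub : forall y, sq y = 1 -> qf M y <= lam.
  by move=> y y1; apply: (sup_upper_bound hS); exists y.
have HR : forall y, qf M y <= lam * sq y.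
  move=> y; have [s0|snz] := eqVneq (sq y) 0.
    rewrite s0 mulr0; have := qf_bound M y; rewrite s0 mulr0 => h.
    exact: le_trans (ler_norm _) h.
  have sp0 : 0 < sq y by rewrite lt_def snz sq_ge0.
  set s := Num.sqrt (sq y).
  have sp : 0 < s by rewrite sqrtr_gt0.
  have s2 : s ^+ 2 = sq y by rewrite sqr_sqrtr // sq_ge0.
  have := ub (s^-1 *: y).
  rewrite sqZ qfZ exprVn s2 mulVf // => /(_ erefl).
  by rewrite -s2 mulrC ler_pdivrMr ?exprn_gt0.
exists lam; split => //.
case: (boolP (eigenvalue M lam)) => // Hne; exfalso.
set Q := M - lam%:M.
have Qu : Q \in unitmx.
  by rewrite -row_free_unit -kermx_eq0; move: Hne; rewrite /eigenvalue /eigenspace negbK.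
set N := lam%:M - M.
have NT : N^T = N.
  apply/matrixP => i j; rewrite !mxE eq_sym.
  by have -> : M j i = M i j by rewrite -{1}HM mxE.
have qfN : forall y, qf N y = lam * sq y - qf M y.
  move=> y; rewrite -!qf_mx -sq_mx mulmxBr mul_mx_scalar mulmxBl -scalemxAl !mxE.
  by [].
have psd : forall y, 0 <= qf N y by move=> y; rewrite qfN subr_ge0.
set Qi := invmx Q.
set Bi := \sum_i \sum_j `|(Qi *m Qi^T) i j|.
set BN := \sum_i \sum_j `|N i j|.
have Bi0 : 0 <= Bi by rewrite sumr_ge0 // => i _; rewrite sumr_ge0.
have BN0 : 0 <= BN by rewrite sumr_ge0 // => i _; rewrite sumr_ge0.
set eps := (Bi * BN + 1)^-1.
have PB0 : 0 <= Bi * BN by rewrite mulr_ge0.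
have eps0 : 0 < eps by rewrite invr_gt0; lra.
have [r [y [y1 ->]] hr] := sup_adherent eps0 hS.
set c := qf N y.
have c0 : 0 <= c by apply: psd.
have ceps : c < eps.
  rewrite /c qfN y1 mulr1; move: hr; rewrite -/lam; set u := qf M y; clearbody lam u eps; move=> *; lra.
set z := y *m N.
set m := sq z.
have m0 : 0 <= m by apply: sq_ge0.
have bilE : bil N z y = m.
  by rewrite /m /z sq_mul NT -qf_mx -bil_mx !mulmxA.
set a := qf N z.
have a0 : 0 <= a by apply: psd.
have aB : a <= BN * m.
  have := qf_bound N z; rewrite -/BN -/a -/m => h; exact: le_trans (ler_norm _) h.
have dsc : m ^+ 2 <= a * c.
  apply: disc => // t.
  have := psd (y + t *: z); rewrite qf_expand // bilE -/c -/a.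
  by rewrite [a * _]mulrC.
have mBc : m <= BN * c.
  have [->|mnz] := eqVneq m 0; first by rewrite mulr_ge0.
  have mp : 0 < m by rewrite lt_def mnz m0.
  have : m * m <= m * (BN * c).
    rewrite -expr2; apply: le_trans dsc _.
    rewrite [m * _]mulrA ler_wpM2r // mulrC; exact: aB.
  by rewrite ler_pM2l.
have one : 1 <= Bi * m.
  have := qf_bound (Qi *m Qi^T) (y *m Q); rewrite -/Bi -sq_mul.
  rewrite mulmxK // y1.
  have -> : y *m Q = - z by rewrite /z /Q /N -mulmxN opprB.
  rewrite sqN -/m => h; exact: le_trans (ler_norm _) h.
have h1 : Bi * m <= Bi * BN * c by rewrite -mulrA ler_wpM2l.
have h2 : Bi * BN * c <= Bi * BN * eps by rewrite ler_wpM2l // ltW.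
have h3 : Bi * BN * eps < 1.
  rewrite /eps ltr_pdivrMr; last lra.
  lra.
by move: h3; rewrite ltNge (le_trans one (le_trans h1 h2)).
Qed.
End Ray.

Set Implicit Arguments. Unset Strict Implicit. Unset Printing Implicit Defensive.

Section Katz.
Variable R : realType.

Lemma adj_sym n (e : rel 'I_n) : symmetric e -> (adjmx R e)^T = adjmx R e.
Proof. by move=> He; apply/matrixP => i j; rewrite !mxE He. Qed.

Lemma adj_ge0 n (e : rel 'I_n) i j : 0 <= adjmx R e i j.
Proof. by rewrite mxE ler0n. Qed.

Lemma katz_norm n (e : rel 'I_n) (l1 : R) : symmetric e ->
  eigenvalue (adjmx R e) l1 ->
  (forall mu : R, eigenvalue (adjmx R e) mu -> mu <= l1) -> 0 < l1 ->
  forall y, sq (y *m adjmx R e) <= l1 ^+ 2 * sq y.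
Proof.
case: n e => [|n] e He el1 Hmax l10.
  by exfalso; move/eigenvalueP: el1 => [v _]; rewrite thinmx0 eqxx.
have n0 : (0 < n.+1)%N by [].
set A := adjmx R e.
have AT : A^T = A by apply: adj_sym.
have A2T : (A *m A)^T = A *m A by rewrite trmx_mul AT.
have [la [ela Hla]] := rayleigh AT n0.
have lal : la <= l1 by apply: Hmax.
have HA : forall y, qf A y <= l1 * sq y.
  by move=> y; apply: le_trans (Hla y) _; rewrite ler_wpM2r // sq_ge0.
have [nu [enu Hnu]] := rayleigh A2T n0.
suff nul : nu <= l1 ^+ 2.
  move=> y; rewrite sq_mul AT; apply: le_trans (Hnu y) _.
  by rewrite ler_wpM2r // sq_ge0.
case: (lerP nu 0) => nu0.
  by apply: le_trans nu0 _; rewrite sqr_ge0.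
set s := Num.sqrt nu.
have sp : 0 < s by rewrite sqrtr_gt0.
have s2 : s ^+ 2 = nu by rewrite sqr_sqrtr // ltW.
have [u uA2 unz] := eigenvalueP enu.
set w := u *m A - s *: u.
have wA : w *m A = (- s) *: w.
  rewrite /w mulmxBl -mulmxA uA2 -scalemxAl.
  apply/rowP => j; rewrite !mxE -s2; ring.
suff ss : s <= l1.
  by rewrite -s2; apply: ler_pM => //; apply: ltW.
have [w0|wnz] := eqVneq w 0.
  apply: Hmax; apply/eigenvalueP; exists u => //.
  by apply/eqP; rewrite -subr_eq0 -/w w0.
have sw : 0 < sq w.
  rewrite lt_def sq_ge0 andbT; apply/eqP => h; move/eqP: wnz; apply.
  exact: sq_eq0.
set aw := map_mx (fun t => `|t|) w.
have sqa : sq aw = sq w.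
  by rewrite /sq; apply: eq_bigr => i _; rewrite mxE -normrX ger0_norm // sqr_ge0.
have qw : qf A w = - s * sq w.
  by rewrite -qf_mx -sq_mx wA -scalemxAl mxE.
have qa : `|qf A w| <= qf A aw.
  rewrite /qf /bil; apply: le_trans (ler_norm_sum _ _ _) _.
  apply: ler_sum => i _; apply: le_trans (ler_norm_sum _ _ _) _.
  apply: ler_sum => j _; rewrite !mxE !normrM normr_nat.
  by [].
have := le_trans qa (HA aw); rewrite qw sqa normrM normrN (gtr0_norm sp).
by rewrite (gtr0_norm sw) ler_pM2r.
Qed.

End Katz.

Unset Implicit Arguments.

Section Final.
Variable R : realType.

Lemma P00E n (e : rel 'I_n) : propmx R e 0 0 = adjmx R e.
Proof.
apply/matrixP => i j.
by rewrite /propmx /Dinvpow mul_mx_diag mul_diag_mx !mxE expr0 invr1 mul1r mulr1.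
Qed.

Lemma katz_terms n (e : rel 'I_n) (beta l1 : R) (x : 'cV[R]_n) : symmetric e ->
  eigenvalue (adjmx R e) l1 ->
  (forall mu : R, eigenvalue (adjmx R e) mu -> mu <= l1) -> 0 < l1 -> 0 < beta ->
  prob_vec x ->
  (forall i v, 0 <= pterm (w_katz beta) (propmx R e 0 0) x i v ord0) /\
  (forall i, \sum_v pterm (w_katz beta) (propmx R e 0 0) x i v ord0
     <= (n%:R + 1) * (beta * l1) ^+ i).
Proof.
move=> He el1 Hmax l10 b0 px.
rewrite P00E; set A := adjmx R e.
have x0 := proj1 px.
have nn : forall k v, 0 <= (A ^+ k *m x) v ord0.
  elim=> [|k IH] v; first by rewrite expr0 mul1mx.
  rewrite exprS -mulmxE -mulmxA mxE sumr_ge0 // => j _.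
  by rewrite mulr_ge0 // adj_ge0.
have cs : forall k, sq ((A ^+ k *m x)^T) <= (l1 ^+ 2) ^+ k * sq (x^T).
  elim=> [|k IH]; first by rewrite expr0 mul1mx expr0 mul1r.
  rewrite exprS -mulmxE -mulmxA trmx_mul adj_sym //.
  apply: le_trans (katz_norm He el1 Hmax l10 _) _.
  rewrite [(l1 ^+ 2) ^+ k.+1]exprS -mulrA; apply: ler_wpM2l; [exact: sqr_ge0 | exact: IH].
have sx : sq (x^T) <= 1.
  rewrite -(@prob_sum R n x px) /sq; apply: ler_sum => v _; rewrite mxE.
  have xv1 : x v ord0 <= 1.
    by rewrite -(@prob_sum R n x px) (bigD1 v) //= lerDl sumr_ge0.
  by rewrite expr2 -[X in _ <= X]mul1r ler_wpM2r.
have ent : forall k v, (A ^+ k *m x) v ord0 <= l1 ^+ k.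
  move=> k v.
  rewrite -ler_sqr ?nnegrE ?exprn_ge0 ?nn //; last exact: ltW.
  have := entry_le ((A ^+ k *m x)^T) v; rewrite mxE => h.
  apply: le_trans h _; apply: le_trans (cs k) _.
  rewrite -exprM mulnC exprM -[X in _ <= X]mulr1.
  by apply: ler_wpM2l; [exact: sqr_ge0 | exact: sx].
split.
  by move=> i v; rewrite /pterm mxE mulr_ge0 ?nn // /w_katz exprn_ge0 // ltW.
move=> i; rewrite /pterm; under eq_bigr do rewrite mxE.
rewrite -mulr_sumr /w_katz.
apply: (@le_trans _ _ (beta ^+ i * (l1 ^+ i *+ n))).
  apply: ler_wpM2l; first by rewrite exprn_ge0 // ltW.
  have -> : l1 ^+ i *+ n = \sum_(v : 'I_n) l1 ^+ i by rewrite sumr_const card_ord.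
  by apply: ler_sum => v _; apply: ent.
rewrite exprMn -mulr_natr.
have -> : beta ^+ i * (l1 ^+ i * n%:R) = n%:R * (beta ^+ i * l1 ^+ i) by ring.
apply: ler_wpM2r; last by rewrite lerDl.
by rewrite mulr_ge0 // exprn_ge0 // ltW.
Qed.

End Final.

Local Close Scope classical_set_scope.

Theorem lemmaC3 (R : realType) :
  (* (i) PageRank: a = 0, b = 1, w_i = alpha (1-alpha)^i *)
  (forall alpha : R, 0 < alpha < 1 ->
    exists C : R, 0 < C /\
    forall (n : nat) (e : rel 'I_n) (x : 'cV[R]_n) (delta : R),
      symmetric e -> prob_vec x -> 0 < delta < 1 ->
      exists L : nat, L%:R <= C * (1 + ln (delta^-1)) /\
        lemmaC3_concl (w_pagerank alpha) (propmx R e 0 1) x delta L) /\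
  (* (ii) heat kernel PageRank: a = 0, b = 1, w_i = e^{-t} t^i / i! *)
  (forall t : R, 0 < t ->
    exists C : R, 0 < C /\
    forall (n : nat) (e : rel 'I_n) (x : 'cV[R]_n) (delta : R),
      symmetric e -> prob_vec x -> 0 < delta < 1 ->
      exists L : nat, L%:R <= C * (1 + ln (delta^-1)) /\
        lemmaC3_concl (w_heat t) (propmx R e 0 1) x delta L) /\
  (* (iii) k-hop transition probability: a = 0, b = 1, w = indicator of k;
     any L >= k works *)
  (forall (k n : nat) (e : rel 'I_n) (x : 'cV[R]_n) (delta : R),
      symmetric e -> prob_vec x -> 0 < delta < 1 ->
      forall L : nat, (k <= L)%N ->
        lemmaC3_concl (w_hop R k) (propmx R e 0 1) x delta L) /\
  (* (iv) Katz: a = b = 0, w_i = beta^i, 0 < beta < 1/lambda_1 *)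
  (forall (n : nat) (e : rel 'I_n) (beta lambda1 : R),
      symmetric e ->
      eigenvalue (adjmx R e) lambda1 ->
      (forall mu : R, eigenvalue (adjmx R e) mu -> mu <= lambda1) ->
      0 < beta -> beta < lambda1^-1 ->
    exists C : R, 0 < C /\
    forall (x : 'cV[R]_n) (delta : R),
      prob_vec x -> 0 < delta < 1 ->
      exists L : nat, L%:R <= C * (1 + ln (delta^-1)) /\
        lemmaC3_concl (w_katz beta) (propmx R e 0 0) x delta L).
Proof.
split.
  move=> alpha /andP[a0 a1].
  have q01 : 0 < 1 - alpha < 1 by apply/andP; split; lra.
  have [C [C0 HC]] := @geo_case R alpha (1 - alpha) 0%N a0 q01.
  exists C; split => // n e x delta He px d01.
  have w0 : forall i, 0 <= w_pagerank alpha i.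
    by move=> i; rewrite /w_pagerank; apply: mulr_ge0; [exact: ltW | apply: exprn_ge0; lra].
  have [T1 T2] := @P01_terms R n e x _ He px w0.
  by apply: HC => // i _; apply: T2.
split.
  move=> t t0.
  have [K [m [K0 HK]]] := @heat_bound R t t0.
  have q01 : 0 < (2 : R)^-1 < 1 by apply/andP; split; lra.
  have [C [C0 HC]] := @geo_case R K 2^-1 m K0 q01.
  exists C; split => // n e x delta He px d01.
  have w0 : forall i, 0 <= w_heat t i by move=> i; apply: ltW; apply: heat_ge0.
  have [T1 T2] := @P01_terms R n e x _ He px w0.
  by apply: HC => // i mi; apply: le_trans (T2 i) (HK i mi).
split.
  move=> k n e x delta He px /andP[d0 d1] L kL.
  have w0 : forall i, 0 <= w_hop R k i by move=> i; rewrite /w_hop ler0n.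
  have [T1 T2] := @P01_terms R n e x _ He px w0.
  apply: (@core R n _ _ x delta 0 L) => //; last by rewrite divr_gt0.
  move=> N; rewrite big1_seq //= => i; rewrite mem_index_iota => /andP[Li _].
  rewrite big1 // => v _; rewrite /pterm mxE /w_hop.
  have -> : (i == k) = false by apply/negbTE; rewrite neq_ltn (leq_ltn_trans kL Li) orbT.
  by rewrite mul0r.
move=> n e beta l1 He el1 Hmax b0 bl.
have l10 : 0 < l1.
  rewrite ltNge; apply/negP => h.
  have : l1^-1 <= 0 by rewrite invr_le0.
  lra.
have q01 : 0 < beta * l1 < 1.
  apply/andP; split; first by rewrite mulr_gt0.
  by move: bl; rewrite -[l1^-1]mul1r ltr_pdivlMr.
have K0 : 0 < n%:R + 1 :> R by rewrite ltr_wpDl.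
have [C [C0 HC]] := @geo_case R (n%:R + 1) (beta * l1) 0%N K0 q01.
exists C; split => // x delta px d01.
have [T1 T2] := @katz_terms R n e beta l1 x He el1 Hmax l10 b0 px.
by apply: HC => // i _; apply: T2.
Qed.
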